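(* Let $n\ge 2$, $a,b,c\in\mathbb{Z}_n$ with $a\neq 0$ and $c$ invertible in $\mathbb{Z}_n$, and $P(x,y)=a+bx+cy$. Then the groupoid $(\mathbb{Z}_n,* )$ with $x*y=P(x,y)$ has the cross inverse property if and only if $bc\equiv 1\pmod n$.
   Context: $\mathbb{Z}_n$ is the ring of integers modulo $n$. Since $c$ is invertible, for each $x$ the map $y\mapsto x*y$ is a bijection, so there is a unique $e_\rho(x)$ with $x*e_\rho(x)=x$ (local right identity) and a unique $x^\rho$ with $x*x^\rho=e_\rho(x)$ (right inverse). The cross inverse property means $(x*y)*x^\rho=y$ for all $x,y\in\mathbb{Z}_n$. *)

(* Defs.v *)
From HB Require Import structures.
From mathcomp Require Import all_boot all_order all_algebra.
Set Implicit Arguments. Unset Strict Implicit. Unset Printing Implicit Defensive.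
Import GRing.Theory.
Local Open Scope ring_scope.

Definition linop (n : nat) (a b c : 'Z_n) (x y : 'Z_n) : 'Z_n := a + b * x + c * y.

(* Local right identity e_rho(x): the (unique, when y |-> x*y is bijective)
   y with x * y = x; picked from the finite type, default x if none. *)
Definition loc_right_id (T : finType) (op : T -> T -> T) (x : T) : T :=
  odflt x [pick y | op x y == x].

Definition right_inv (T : finType) (op : T -> T -> T) (x : T) : T :=
  odflt x [pick y | op x y == loc_right_id op x].

Definition cross_inverse_prop (T : finType) (op : T -> T -> T) : Prop :=
  forall x y : T, op (op x y) (right_inv op x) = y.

(* Main.v *)
Require Import Defs.
From HB Require Import structures.
From mathcomp Require Import all_boot all_order all_algebra.
From mathcomp Require Import ring.
Import GRing.Theory.
Local Open Scope ring_scope.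

Lemma pick_sol (n : nat) (a b c x t : 'Z_n) : c \is a GRing.unit ->
  c * odflt x [pick y | linop a b c x y == t] = t - a - b * x.
Proof.
move=> cU; case: pickP => [y /eqP H|H] /=.
  by rewrite -H /linop; ring.
have := H (c^-1 * (t - a - b * x)); rewrite /linop mulrA divrr // mul1r.
have -> : a + b * x + (t - a - b * x) = t by ring.
by rewrite eqxx.
Qed.

Theorem mainTheorem17 (n : nat) (a b c : 'Z_n) :
  (1 < n)%N -> a != 0 -> c \is a GRing.unit ->
  cross_inverse_prop (linop a b c) <-> b * c = 1.
Proof.
move=> _ _ cU; split.
  move=> H.
  have E0 := H 0 0; have E1 := H 0 1.
  move: E0 E1; rewrite /linop.
  set r := right_inv _ _ => E0 E1.
  have -> : b * c = (a + b * (a + b * 0 + c * 1) + c * r)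
                    - (a + b * (a + b * 0 + c * 0) + c * r) by ring.
  by rewrite E1 E0 subr0.
move=> Hbc x y.
have Hr := @pick_sol _ a b c x (loc_right_id (linop a b c) x) cU.
have He := @pick_sol _ a b c x x cU.
rewrite -/(right_inv _ _) in Hr.
rewrite -/(loc_right_id _ _) in He Hr.
set r := right_inv _ _ in Hr *; set e := loc_right_id _ _ in Hr He *.
rewrite /linop Hr.
have -> : e = b * (x - a - b * x) by rewrite -He mulrA Hbc mul1r.
have -> : a + b * (a + b * x + c * y) + (b * (x - a - b * x) - a - b * x)
          = y + (b * c - 1) * y by ring.
by rewrite Hbc subrr mul0r addr0.
Qed.
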